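(* Let $p,q\ge 2$ be relatively prime integers. Then $$p\sum_{n=1}^{q-1}\cot\!\Big(\frac{\pi np}{q}\Big)\cot^3\!\Big(\frac{\pi n}{q}\Big)+q\sum_{n=1}^{p-1}\cot\!\Big(\frac{\pi nq}{p}\Big)\cot^3\!\Big(\frac{\pi n}{p}\Big)=\frac{1}{45}\left(p^4+q^4-5p^2q^2-15p^2-15q^2+45pq-12\right).$$ *)

(* Defs.v *)
From Stdlib Require Import Reals ZArith Znumtheory.
Open Scope R_scope.

Definition cot (x : R) : R := cos x / sin x.

Fixpoint sum1 (f : nat -> R) (m : nat) : R :=
  match m with
  | O => 0
  | S k => sum1 f k + f (S k)
  end.

(* Main.v *)
Require Import Defs.
From Stdlib Require Import Reals ZArith Znumtheory Lra Lia.
Open Scope R_scope.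

Fixpoint sumz (f : nat -> R) (N : nat) : R :=
  match N with O => 0 | S k => sumz f k + f k end.

Lemma sum1_sumz f N : sum1 f N = sumz (fun k => f (S k)) N.
Proof. induction N; simpl; [reflexivity| rewrite IHN; reflexivity]. Qed.

Lemma sumz_ext f g N : (forall k, (k < N)%nat -> f k = g k) -> sumz f N = sumz g N.
Proof. induction N; intros H; simpl; [reflexivity|]. rewrite IHN by (intros; apply H; lia). rewrite H by lia. reflexivity. Qed.

Lemma sumz_plus f g N : sumz (fun k => f k + g k) N = sumz f N + sumz g N.
Proof. induction N; simpl; [lra| rewrite IHN; lra]. Qed.

Lemma sumz_scal c f N : sumz (fun k => c * f k) N = c * sumz f N.
Proof. induction N; simpl; [lra| rewrite IHN; lra]. Qed.

Lemma sumz_const c N : sumz (fun _ => c) N = INR N * c.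
Proof. induction N; simpl sumz; [simpl; lra| rewrite IHN, S_INR; lra]. Qed.

Lemma sumz_shift f N : sumz f (S N) = f O + sumz (fun k => f (S k)) N.
Proof. induction N; simpl in *; [lra|]. rewrite IHN. lra. Qed.

Lemma sumz_swap (F : nat -> nat -> R) N M :
  sumz (fun i => sumz (fun j => F i j) M) N = sumz (fun j => sumz (fun i => F i j) N) M.
Proof.
  induction N; simpl.
  - induction M; simpl; [reflexivity| rewrite <- IHM; lra].
  - rewrite IHN. rewrite <- sumz_plus. reflexivity.
Qed.

Lemma sumz_rev g N : sumz g N = sumz (fun k => g (N - S k)%nat) N.
Proof.
  revert g; induction N; intros g; [reflexivity|].
  change (sumz g N + g N = sumz (fun k => g (S N - S k)%nat) (S N)).
  rewrite sumz_shift. rewrite IHN.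
  replace (S N - 1)%nat with N by lia. simpl. lra.
Qed.

Lemma sum1_ext f g N : (forall k, (1 <= k <= N)%nat -> f k = g k) -> sum1 f N = sum1 g N.
Proof. intros H; rewrite !sum1_sumz; apply sumz_ext; intros; apply H; lia. Qed.
Lemma sum1_plus f g N : sum1 (fun k => f k + g k) N = sum1 f N + sum1 g N.
Proof. rewrite !sum1_sumz; apply sumz_plus. Qed.
Lemma sum1_scal c f N : sum1 (fun k => c * f k) N = c * sum1 f N.
Proof. rewrite !sum1_sumz; apply sumz_scal. Qed.
Lemma sum1_const c N : sum1 (fun _ => c) N = INR N * c.
Proof. rewrite !sum1_sumz; apply sumz_const. Qed.
Lemma sum1_swap (F : nat -> nat -> R) N M :
  sum1 (fun i => sum1 (fun j => F i j) M) N = sum1 (fun j => sum1 (fun i => F i j) N) M.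
Proof.
  rewrite !sum1_sumz.
  transitivity (sumz (fun i => sumz (fun j => F (S i) (S j)) M) N).
  { apply sumz_ext; intros; rewrite sum1_sumz; reflexivity. }
  rewrite sumz_swap. apply sumz_ext; intros; rewrite sum1_sumz; reflexivity.
Qed.
Lemma sum1_prod f g N M :
  sum1 (fun i => sum1 (fun j => f i * g j) M) N = sum1 f N * sum1 g M.
Proof.
  rewrite Rmult_comm, <- sum1_scal.
  apply sum1_ext; intros. rewrite Rmult_comm, <- sum1_scal. apply sum1_ext; intros; lra.
Qed.
Lemma dsum_plus (F G : nat -> nat -> R) N M :
  sum1 (fun i => sum1 (fun j => F i j + G i j) M) N =
  sum1 (fun i => sum1 (fun j => F i j) M) N + sum1 (fun i => sum1 (fun j => G i j) M) N.
Proof. rewrite <- sum1_plus. apply sum1_ext; intros; apply sum1_plus. Qed.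

Lemma tele_cos a b N :
  sin b * sumz (fun m => cos (a + 2 * b * INR m)) N = (sin (a + (2 * INR N - 1) * b) - sin (a - b)) / 2.
Proof.
  induction N; simpl sumz.
  - simpl. replace (a + (2*0-1)*b) with (a - b) by ring. lra.
  - rewrite Rmult_plus_distr_l, IHN, S_INR.
    replace (a + (2 * (INR N + 1) - 1) * b) with ((a + 2*b*INR N) + b) by ring.
    replace (a + (2 * INR N - 1) * b) with ((a + 2*b*INR N) - b) by ring.
    rewrite sin_plus, (sin_minus (a + 2*b*INR N) b). lra.
Qed.

Lemma tele_sin a b N :
  sin b * sumz (fun m => sin (a + 2 * b * INR m)) N = (cos (a - b) - cos (a + (2 * INR N - 1) * b)) / 2.
Proof.
  induction N; simpl sumz.
  - simpl. replace (a + (2*0-1)*b) with (a - b) by ring. lra.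
  - rewrite Rmult_plus_distr_l, IHN, S_INR.
    replace (a + (2 * (INR N + 1) - 1) * b) with ((a + 2*b*INR N) + b) by ring.
    replace (a + (2 * INR N - 1) * b) with ((a + 2*b*INR N) - b) by ring.
    rewrite cos_plus, (cos_minus (a + 2*b*INR N) b). lra.
Qed.

Lemma star u p : sin u <> 0 -> sin (INR p * u) <> 0 ->
  cot u = sumz (fun j => sin (2 * INR j * u) + cos (2 * INR j * u) * cot (INR p * u)) p.
Proof.
  intros Hu HX.
  rewrite sumz_plus.
  rewrite (sumz_ext (fun j => cos (2 * INR j * u) * cot (INR p * u)) (fun j => cot (INR p * u) * cos (0 + 2 * u * INR j)))
    by (intros; cbv beta; replace (0 + 2*u*INR k) with (2*INR k*u) by ring; ring).
  rewrite (sumz_ext (fun j => sin (2 * INR j * u)) (fun j => sin (0 + 2 * u * INR j)))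
    by (intros; cbv beta; replace (0 + 2*u*INR k) with (2*INR k*u) by ring; ring).
  rewrite sumz_scal.
  pose proof (tele_cos 0 u p) as Hc. pose proof (tele_sin 0 u p) as Hs.
  set (Sc := sumz (fun m => cos (0 + 2 * u * INR m)) p) in *. set (Ss := sumz (fun m => sin (0 + 2 * u * INR m)) p) in *.
  assert (ESc : Sc = (sin (0 + (2 * INR p - 1) * u) - sin (0 - u)) / 2 / sin u) by (rewrite <- Hc; field; auto).
  assert (ESs : Ss = (cos (0 - u) - cos (0 + (2 * INR p - 1) * u)) / 2 / sin u) by (rewrite <- Hs; field; auto).
  rewrite ESc, ESs. clear ESc ESs Hc Hs Sc Ss.
  set (X := INR p * u) in *.
  replace (0 + (2 * INR p - 1) * u) with (2 * X - u) by (unfold X; ring).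
  replace (0 - u) with (- u) by ring.
  rewrite sin_minus, cos_minus, sin_2a, cos_2a, sin_neg, cos_neg.
  unfold cot. apply (Rmult_eq_reg_l (2 * sin u * sin X)); [|intro H0; apply Rmult_integral in H0; destruct H0 as [H0|H0]; [apply Rmult_integral in H0; destruct H0; lra| auto]].
  field_simplify; [|split; auto|auto].
  assert (E : sin X * sin X + cos X * cos X = 1) by (pose proof (sin2_cos2 X); unfold Rsqr in *; lra).
  set (sX := sin X) in *. set (cX := cos X) in *. set (su := sin u). set (cu := cos u).
  transitivity (cu*sX*(1 + (sX*sX+cX*cX)) + cX*su*(1 - (sX*sX+cX*cX))); [rewrite E; ring | ring].
Qed.

Lemma cot_shift x m : cot (x + INR m * PI) = cot x.
Proof.
  induction m; [simpl; f_equal; ring|].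
  rewrite S_INR. replace (x + (INR m + 1) * PI) with ((x + INR m * PI) + PI) by ring.
  unfold cot in *. rewrite neg_cos, neg_sin. unfold Rdiv in *. rewrite Rinv_opp.
  rewrite <- IHm. ring.
Qed.

Lemma sin_shift_nz x m : sin x <> 0 -> sin (x + INR m * PI) <> 0.
Proof.
  intros H; induction m; [simpl; replace (x + 0*PI) with x by ring; auto|].
  rewrite S_INR. replace (x + (INR m + 1) * PI) with ((x + INR m * PI) + PI) by ring.
  rewrite neg_sin. intro H'; apply IHm; lra.
Qed.

Lemma sinb_nz J p : (0 < J < p)%nat -> sin (PI * INR J / INR p) <> 0.
Proof.
  intros H. apply Rgt_not_eq, sin_gt_0.
  - apply Rdiv_lt_0_compat; [apply Rmult_lt_0_compat; [apply PI_RGT_0| apply lt_0_INR; lia]| apply lt_0_INR; lia].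
  - assert (INR J < INR p) by (apply lt_INR; lia). assert (0 < INR p) by (apply lt_0_INR; lia).
    pose proof PI_RGT_0. apply Rmult_lt_reg_r with (INR p); auto.
    replace (PI * INR J / INR p * INR p) with (PI * INR J) by (field; lra). nra.
Qed.

Lemma root_cos a J p : (0 < J < p)%nat ->
  sumz (fun m => cos (a + 2 * (PI * INR J / INR p) * INR m)) p = 0.
Proof.
  intros H. pose proof (tele_cos a (PI * INR J / INR p) p) as T.
  assert (0 < INR p) by (apply lt_0_INR; lia).
  replace (a + (2 * INR p - 1) * (PI * INR J / INR p)) with ((a - PI * INR J / INR p) + 2 * INR J * PI) in T by (field; lra).
  rewrite sin_period in T.
  assert (T0 : sin (PI * INR J / INR p) * sumz _ p = 0) by (rewrite T; field). clear T. rename T0 into T.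
  apply Rmult_integral in T. destruct T as [T|T]; [exfalso; apply (sinb_nz J p H); auto| auto].
Qed.

Lemma root_sin a J p : (0 < J < p)%nat ->
  sumz (fun m => sin (a + 2 * (PI * INR J / INR p) * INR m)) p = 0.
Proof.
  intros H. pose proof (tele_sin a (PI * INR J / INR p) p) as T.
  assert (0 < INR p) by (apply lt_0_INR; lia).
  replace (a + (2 * INR p - 1) * (PI * INR J / INR p)) with ((a - PI * INR J / INR p) + 2 * INR J * PI) in T by (field; lra).
  rewrite cos_period in T.
  assert (T0 : sin (PI * INR J / INR p) * sumz _ p = 0) by (rewrite T; field). clear T. rename T0 into T.
  apply Rmult_integral in T. destruct T as [T|T]; [exfalso; apply (sinb_nz J p H); auto| auto].
Qed.

Lemma lemmaA th p : (1 <= p)%nat -> sin (INR p * th) <> 0 ->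
  (forall m, (m < p)%nat -> sin (th + PI * INR m / INR p) <> 0) ->
  sumz (fun m => cot (th + PI * INR m / INR p)) p = INR p * cot (INR p * th).
Proof.
  intros Hp HX Hu. assert (0 < INR p) by (apply lt_0_INR; lia).
  set (K := cot (INR p * th)).
  rewrite (sumz_ext _ (fun m => sumz (fun j => sin (2 * INR j * th + 2 * (PI * INR j / INR p) * INR m)
        + K * cos (2 * INR j * th + 2 * (PI * INR j / INR p) * INR m)) p)).
  2:{ intros m Hm. cbv beta. rewrite (star _ p (Hu m Hm)).
      2:{ replace (INR p * (th + PI * INR m / INR p)) with (INR p * th + INR m * PI) by (field; lra).
          apply sin_shift_nz; auto. }
      apply sumz_ext; intros j Hj.
      replace (INR p * (th + PI * INR m / INR p)) with (INR p * th + INR m * PI) by (field; lra).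
      rewrite cot_shift. fold K.
      replace (2 * INR j * (th + PI * INR m / INR p)) with (2 * INR j * th + 2 * (PI * INR j / INR p) * INR m) by (field; lra).
      ring. }
  rewrite sumz_swap. destruct p as [|p']; [lia|].
  rewrite sumz_shift.
  rewrite (sumz_ext (fun j => sumz _ (S p')) (fun _ => 0)).
  2:{ intros j Hj. cbv beta. rewrite sumz_plus, sumz_scal, root_sin, root_cos by lia. ring. }
  rewrite sumz_const. simpl (INR 0).
  rewrite (sumz_ext _ (fun _ => K)) by (intros; cbv beta; replace (2 * 0 * th + 2 * (PI * 0 / INR (S p')) * INR k) with 0 by (field; lra); rewrite sin_0, cos_0; ring).
  rewrite sumz_const. ring.
Qed.

Lemma sin_nz k N : (0 < N)%nat -> ~ (Z.of_nat N | Z.of_nat k)%Z -> sin (PI * INR k / INR N) <> 0.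
Proof.
  intros HN Hd H. apply sin_eq_0_0 in H. destruct H as [z Hz].
  apply Hd. exists z. apply eq_IZR. rewrite mult_IZR, <- !INR_IZR_INZ.
  assert (0 < INR N) by (apply lt_0_INR; lia). pose proof PI_RGT_0.
  apply Rmult_eq_reg_l with (PI / INR N); [|apply Rgt_not_eq, Rdiv_lt_0_compat; lra].
  replace (PI / INR N * INR k) with (PI * INR k / INR N) by (field; lra). rewrite Hz. field; lra.
Qed.

Lemma not_div_aux p q n : Z.gcd (Z.of_nat p) (Z.of_nat q) = 1%Z -> (1 <= n < q)%nat ->
  ~ (Z.of_nat q | Z.of_nat p * Z.of_nat n)%Z.
Proof.
  intros Hg Hn Hd. apply Z.gauss in Hd; [|rewrite Z.gcd_comm; auto].
  apply Z.divide_pos_le in Hd; lia.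
Qed.

Lemma nz_pair p q n m : Z.gcd (Z.of_nat p) (Z.of_nat q) = 1%Z -> (1 <= p)%nat -> (1 <= n < q)%nat -> (m < p)%nat ->
  sin (PI * INR n / INR q + PI * INR m / INR p) <> 0.
Proof.
  intros Hg Hp Hn Hm.
  replace (PI * INR n / INR q + PI * INR m / INR p) with (PI * INR (n * p + m * q) / INR (p * q)).
  2:{ rewrite plus_INR, !mult_INR. assert (0 < INR p) by (apply lt_0_INR; lia).
      assert (0 < INR q) by (apply lt_0_INR; lia). field; lra. }
  apply sin_nz; [nia|]. intros [c Hc]. apply (not_div_aux p q n Hg Hn).
  exists (c * Z.of_nat p - Z.of_nat m)%Z. rewrite Nat2Z.inj_add, !Nat2Z.inj_mul in Hc. nia.
Qed.

Lemma nz_mult p q n : Z.gcd (Z.of_nat p) (Z.of_nat q) = 1%Z -> (1 <= n < q)%nat ->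
  sin (INR p * (PI * INR n / INR q)) <> 0.
Proof.
  intros Hg Hn.
  replace (INR p * (PI * INR n / INR q)) with (PI * INR (p * n) / INR q).
  2:{ rewrite mult_INR. assert (0 < INR q) by (apply lt_0_INR; lia). field; lra. }
  apply sin_nz; [lia|]. rewrite Nat2Z.inj_mul. apply not_div_aux; auto.
Qed.

Definition Cc p q n m := cot (PI * INR n / INR q + PI * INR m / INR p).

Lemma core p q (w : nat -> R) : Z.gcd (Z.of_nat p) (Z.of_nat q) = 1%Z -> (1 <= p)%nat ->
  INR p * sum1 (fun n => cot (INR p * (PI * INR n / INR q)) * w n) (q - 1) =
  sum1 (fun n => cot (PI * INR n / INR q) * w n) (q - 1)
  + sum1 (fun n => sum1 (fun m => Cc p q n m * w n) (p - 1)) (q - 1).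
Proof.
  intros Hg Hp. rewrite <- sum1_scal, <- sum1_plus. apply sum1_ext. intros n Hn.
  rewrite <- Rmult_assoc, <- lemmaA; auto.
  2: apply nz_mult; auto; lia.
  2: intros; apply nz_pair; auto; lia.
  replace p with (S (p - 1)) at 1 by lia. rewrite sumz_shift, sum1_sumz.
  unfold Cc. rewrite Rmult_plus_distr_r. f_equal.
  - simpl INR. f_equal. f_equal. unfold Rdiv. ring.
  - rewrite Rmult_comm, <- sumz_scal. apply sumz_ext; intros; ring.
Qed.

Lemma dsum_poly3 (a b : nat -> R) N M :
  sum1 (fun n => sum1 (fun m => (a n * b m - 1) * (a n ^ 2 - a n * b m + b m ^ 2)) M) N =
  sum1 (fun n => a n ^ 3) N * sum1 b M - sum1 (fun n => a n ^ 2) N * sum1 (fun m => b m ^ 2) M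
  + sum1 a N * sum1 (fun m => b m ^ 3) M - INR M * sum1 (fun n => a n ^ 2) N
  + sum1 a N * sum1 b M - INR N * sum1 (fun m => b m ^ 2) M.
Proof.
  rewrite (sum1_ext _ (fun n => sum1 (fun m =>
     a n ^ 3 * b m + (- a n ^ 2) * b m ^ 2 + a n * b m ^ 3 + (- a n ^ 2) * 1 + a n * b m + (-1) * b m ^ 2) M) N)
   by (intros; apply sum1_ext; intros; ring).
  rewrite !dsum_plus, !sum1_prod, sum1_const.
  rewrite (sum1_ext (fun n => - a n ^ 2) (fun n => (-1) * a n ^ 2)) by (intros; ring).
  rewrite sum1_scal, (sum1_ext (fun _ => -1) (fun _ => -1 * 1)) by (intros; ring).
  rewrite sum1_const. ring.
Qed.

Lemma dsum_poly1 (a b : nat -> R) N M :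
  sum1 (fun n => sum1 (fun m => a n * b m - 1) M) N = sum1 a N * sum1 b M - INR N * INR M.
Proof.
  rewrite (sum1_ext _ (fun n => sum1 (fun m => a n * b m + (-1) * 1) M) N)
   by (intros; apply sum1_ext; intros; ring).
  rewrite !dsum_plus, !sum1_prod, !sum1_const. ring.
Qed.

Lemma cot_add a b : sin a <> 0 -> sin b <> 0 -> sin (a + b) <> 0 ->
  cot (a + b) * (cot a + cot b) = cot a * cot b - 1.
Proof.
  intros Ha Hb Hab. unfold cot. assert (E := sin_plus a b). rewrite cos_plus.
  assert (cot_tmp : cos a / sin a + cos b / sin b = sin (a + b) / (sin a * sin b)) by (rewrite E; field; auto).
  rewrite cot_tmp. field. auto.
Qed.

Lemma sum1_antisym f N : (forall k, (1 <= k <= N)%nat -> f (S N - k)%nat = - f k) -> sum1 f N = 0.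
Proof.
  intros H. assert (E : sumz (fun k => f (S k)) N = (-1) * sumz (fun k => f (S k)) N).
  { rewrite <- sumz_scal. rewrite sumz_rev at 1. apply sumz_ext; intros k Hk. cbv beta.
    replace (S (N - S k)) with (S N - S k)%nat by lia. rewrite H by lia. ring. }
  rewrite sum1_sumz. lra.
Qed.

Definition A q n := cot (PI * INR n / INR q).

Lemma A_anti q n : (1 <= q)%nat -> (n <= q)%nat -> A q (q - n) = - A q n.
Proof.
  intros Hq Hn. unfold A. rewrite minus_INR by auto.
  assert (0 < INR q) by (apply lt_0_INR; lia).
  replace (PI * (INR q - INR n) / INR q) with (- (PI * INR n / INR q) + INR 1 * PI) by (simpl; field; lra).
  rewrite cot_shift. unfold cot. rewrite sin_neg, cos_neg. unfold Rdiv. rewrite Rinv_opp. ring.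
Qed.

Lemma sumA_odd q k : (1 <= q)%nat -> (forall x, (- x) ^ k = - x ^ k) -> sum1 (fun n => A q n ^ k) (q - 1) = 0.
Proof.
  intros Hq Hk. apply sum1_antisym. intros j Hj.
  replace (S (q - 1) - j)%nat with (q - j)%nat by lia. rewrite A_anti by lia. apply Hk.
Qed.

Definition s q k := sum1 (fun n => A q n ^ k) (q - 1).

Lemma pair_point p q n m : Z.gcd (Z.of_nat p) (Z.of_nat q) = 1%Z -> (1 <= n < q)%nat -> (1 <= m < p)%nat ->
  Cc p q n m * (A q n + A p m) = A q n * A p m - 1.
Proof.
  intros Hg Hn Hm. unfold Cc, A. apply cot_add.
  - apply sinb_nz; lia.
  - apply sinb_nz; lia.
  - apply nz_pair; auto; lia.
Qed.

Lemma recip_gen p q (f : R -> R) : Z.gcd (Z.of_nat p) (Z.of_nat q) = 1%Z -> (1 <= p)%nat -> (1 <= q)%nat ->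
  INR p * sum1 (fun n => cot (INR p * (PI * INR n / INR q)) * f (A q n)) (q - 1)
  + INR q * sum1 (fun m => cot (INR q * (PI * INR m / INR p)) * f (A p m)) (p - 1)
  = sum1 (fun n => A q n * f (A q n)) (q - 1) + sum1 (fun m => A p m * f (A p m)) (p - 1)
    + sum1 (fun n => sum1 (fun m => Cc p q n m * (f (A q n) + f (A p m))) (p - 1)) (q - 1).
Proof.
  intros Hg Hp Hq.
  rewrite (core p q (fun n => f (A q n))) by auto.
  rewrite (core q p (fun m => f (A p m))) by (try rewrite Z.gcd_comm; auto).
  rewrite (sum1_swap (fun m n => Cc q p m n * f (A p m))).
  rewrite (sum1_ext (fun n => sum1 (fun m => Cc p q n m * (f (A q n) + f (A p m))) (p - 1))
     (fun n => sum1 (fun m => Cc p q n m * f (A q n) + Cc q p m n * f (A p m)) (p - 1))).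
  2:{ intros n Hn. apply sum1_ext; intros m Hm. unfold Cc. rewrite (Rplus_comm (PI * INR m / INR p)). ring. }
  rewrite dsum_plus. unfold A. ring.
Qed.

Lemma recip3 p q : Z.gcd (Z.of_nat p) (Z.of_nat q) = 1%Z -> (1 <= p)%nat -> (1 <= q)%nat ->
  INR p * sum1 (fun n => cot (INR p * (PI * INR n / INR q)) * A q n ^ 3) (q - 1)
  + INR q * sum1 (fun m => cot (INR q * (PI * INR m / INR p)) * A p m ^ 3) (p - 1)
  = s q 4 + s p 4 - s q 2 * s p 2 - INR (p - 1) * s q 2 - INR (q - 1) * s p 2.
Proof.
  intros Hg Hp Hq.
  rewrite (recip_gen p q (fun x => x ^ 3)) by auto.
  rewrite (sum1_ext (fun n => sum1 (fun m => Cc p q n m * (A q n ^ 3 + A p m ^ 3)) (p - 1))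
     (fun n => sum1 (fun m => (A q n * A p m - 1) * (A q n ^ 2 - A q n * A p m + A p m ^ 2)) (p - 1))).
  2:{ intros n Hn. apply sum1_ext; intros m Hm.
      rewrite <- (pair_point p q n m) by (auto; lia). ring. }
  rewrite dsum_poly3. unfold s.
  rewrite (sumA_odd q 3), (sumA_odd p 3) by (auto; intros; ring).
  rewrite (sum1_ext (fun n => A q n) (fun n => A q n ^ 1)) by (intros; ring).
  rewrite (sum1_ext (fun n => A p n) (fun n => A p n ^ 1)) by (intros; ring).
  rewrite (sumA_odd q 1), (sumA_odd p 1) by (auto; intros; ring).
  rewrite (sum1_ext (fun n => A q n * A q n ^ 3) (fun n => A q n ^ 4)) by (intros; ring).
  rewrite (sum1_ext (fun n => A p n * A p n ^ 3) (fun n => A p n ^ 4)) by (intros; ring).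
  ring.
Qed.

Lemma recip1 p q : Z.gcd (Z.of_nat p) (Z.of_nat q) = 1%Z -> (1 <= p)%nat -> (1 <= q)%nat ->
  INR p * sum1 (fun n => cot (INR p * (PI * INR n / INR q)) * A q n) (q - 1)
  + INR q * sum1 (fun m => cot (INR q * (PI * INR m / INR p)) * A p m) (p - 1)
  = s q 2 + s p 2 - INR (q - 1) * INR (p - 1).
Proof.
  intros Hg Hp Hq.
  rewrite (recip_gen p q (fun x => x)) by auto.
  rewrite (sum1_ext (fun n => sum1 (fun m => Cc p q n m * (A q n + A p m)) (p - 1))
     (fun n => sum1 (fun m => A q n * A p m - 1) (p - 1))).
  2:{ intros n Hn. apply sum1_ext; intros m Hm. apply pair_point; auto; lia. }
  rewrite dsum_poly1. unfold s.
  rewrite (sum1_ext (fun n => A q n) (fun n => A q n ^ 1)) by (intros; ring).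
  rewrite (sum1_ext (fun n => A p n) (fun n => A p n ^ 1)) by (intros; ring).
  rewrite (sumA_odd q 1), (sumA_odd p 1) by (auto; intros; ring).
  rewrite (sum1_ext (fun n => A q n * A q n) (fun n => A q n ^ 2)) by (intros; ring).
  rewrite (sum1_ext (fun n => A p n * A p n) (fun n => A p n ^ 2)) by (intros; ring).
  ring.
Qed.

Lemma gcd_succ q : Z.gcd (Z.of_nat (S q)) (Z.of_nat q) = 1%Z.
Proof.
  rewrite Z.gcd_comm. replace (Z.of_nat (S q)) with (1 + 1 * Z.of_nat q)%Z by lia.
  rewrite Z.gcd_add_mult_diag_r. apply Z.gcd_1_r.
Qed.

Lemma cotS q n : (1 <= q)%nat -> cot (INR (S q) * (PI * INR n / INR q)) = A q n.
Proof.
  intros Hq. assert (0 < INR q) by (apply lt_0_INR; lia). unfold A.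
  rewrite <- (cot_shift (PI * INR n / INR q) n). f_equal. rewrite S_INR. field; lra.
Qed.

Lemma cotS2 q m : cot (INR q * (PI * INR m / INR (S q))) = - A (S q) m.
Proof.
  assert (0 < INR (S q)) by (apply lt_0_INR; lia). unfold A.
  replace (INR q * (PI * INR m / INR (S q))) with (- (PI * INR m / INR (S q)) + INR m * PI)
    by (rewrite S_INR in *; field; lra).
  rewrite cot_shift. unfold cot. rewrite sin_neg, cos_neg. unfold Rdiv. rewrite Rinv_opp. ring.
Qed.

Lemma s2_closed k : s (S k) 2 = INR k * (INR k - 1) / 3.
Proof.
  induction k.
  - unfold s. simpl. lra.
  - pose proof (recip1 (S (S k)) (S k) (gcd_succ (S k)) ltac:(lia) ltac:(lia)) as R.
    rewrite (sum1_ext _ (fun n => A (S k) n ^ 2)) in R by (intros; rewrite cotS by lia; ring).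
    rewrite (sum1_ext (fun m => cot (INR (S k) * (PI * INR m / INR (S (S k)))) * A (S (S k)) m)
               (fun m => - 1 * A (S (S k)) m ^ 2)) in R by (intros; rewrite cotS2; ring).
    rewrite sum1_scal in R. fold (s (S k) 2) in R. fold (s (S (S k)) 2) in R.
    replace (S k - 1)%nat with k in R by lia. replace (S (S k) - 1)%nat with (S k) in R by lia.
    rewrite IHk in R. rewrite !S_INR in *.
    apply (Rmult_eq_reg_l (INR k + 1 + 1)); [|pose proof (pos_INR k); lra].
    lra.
Qed.

Lemma s4_closed k : s (S k) 4 = INR k * (INR k - 1) * (INR k * INR k + 5 * INR k - 9) / 45.
Proof.
  induction k.
  - unfold s. simpl. lra.
  - pose proof (recip3 (S (S k)) (S k) (gcd_succ (S k)) ltac:(lia) ltac:(lia)) as R.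
    rewrite (sum1_ext _ (fun n => A (S k) n ^ 4)) in R by (intros; rewrite cotS by lia; ring).
    rewrite (sum1_ext (fun m => cot (INR (S k) * (PI * INR m / INR (S (S k)))) * A (S (S k)) m ^ 3)
               (fun m => - 1 * A (S (S k)) m ^ 4)) in R by (intros; rewrite cotS2; ring).
    rewrite sum1_scal in R. fold (s (S k) 4) in R. fold (s (S (S k)) 4) in R.
    replace (S k - 1)%nat with k in R by lia. replace (S (S k) - 1)%nat with (S k) in R by lia.
    rewrite IHk, !s2_closed in R. rewrite !S_INR in *.
    apply (Rmult_eq_reg_l (INR k + 1 + 1)); [|pose proof (pos_INR k); lra].
    lra.
Qed.

Theorem mainTheorem15 (p q : nat) (hp : (2 <= p)%nat) (hq : (2 <= q)%nat)
  (hcop : Z.gcd (Z.of_nat p) (Z.of_nat q) = 1%Z) :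
  INR p * sum1 (fun n => cot (PI * INR n * INR p / INR q) * (cot (PI * INR n / INR q)) ^ 3) (q - 1)
  + INR q * sum1 (fun n => cot (PI * INR n * INR q / INR p) * (cot (PI * INR n / INR p)) ^ 3) (p - 1)
  = / 45 * (INR p ^ 4 + INR q ^ 4 - 5 * INR p ^ 2 * INR q ^ 2 - 15 * INR p ^ 2
            - 15 * INR q ^ 2 + 45 * INR p * INR q - 12).
Proof.
  rewrite (sum1_ext _ (fun n => cot (INR p * (PI * INR n / INR q)) * A q n ^ 3))
    by (intros; unfold A; do 2 f_equal; unfold Rdiv; ring).
  rewrite (sum1_ext (fun n => cot (PI * INR n * INR q / INR p) * _)
             (fun n => cot (INR q * (PI * INR n / INR p)) * A p n ^ 3))
    by (intros; unfold A; do 2 f_equal; unfold Rdiv; ring).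
  rewrite recip3 by (auto; lia).
  destruct p as [|p']; [lia|]. destruct q as [|q']; [lia|].
  rewrite !s2_closed, !s4_closed.
  replace (S p' - 1)%nat with p' by lia. replace (S q' - 1)%nat with q' by lia.
  rewrite !S_INR. field.
Qed.
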